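(* Let $K\ge 1$ be an integer, $\alpha\in(0,1)$, $\epsilon>0$, $\delta>0$, and let $n_\mathrm{cal}$ be a positive integer. Set $C(K)=(1+\epsilon)\sum_{j=1}^K \frac{1}{j}$ and, for $j=1,\dots,K$, $a_j=\left\lfloor (n_\mathrm{cal}+1)\frac{\alpha j}{C(K)K}\right\rfloor$, $b_j=(n_\mathrm{cal}+1)-a_j$, $\mu_j=\frac{a_j}{a_j+b_j}$. Suppose $n_\mathrm{cal}$ is such that $$\min_{j=1,\dots,K} I_{(1+\epsilon)\mu_j}(a_j,b_j)\ \ge\ 1-\frac{\delta}{K^2},$$ where $I_x(a,b)$ denotes the regularized incomplete beta function (the CDF at $x$ of a $\mathrm{Beta}(a,b)$ distribution). Let $\{r^i_j : i,j=1,\dots,K\}$ be random variables (with arbitrary joint distribution) such that $r^i_j\sim\mathrm{Beta}(a_j,b_j)$ for each $i,j$. Then $$P\left\{\bigcap_{i=1}^K\bigcap_{j=1}^K\left\{ r^i_j\le (1+\epsilon)\frac{\alpha j}{C(K)K}\right\}\right\}\ \ge\ 1-\delta.$$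
   Context: The quantities $a_j,b_j$ are assumed to be such that the Beta distributions $\mathrm{Beta}(a_j,b_j)$ are well defined (i.e. $a_j\ge 1$, $b_j\ge 1$), as implicit in the hypothesis. *)

(* Defs.v *)
From HB Require Import structures.
From mathcomp Require Import all_boot all_order all_algebra.
From mathcomp Require Import all_classical all_reals all_analysis.
Set Implicit Arguments. Unset Strict Implicit. Unset Printing Implicit Defensive.
Import Order.TTheory GRing.Theory Num.Theory.
Local Open Scope classical_set_scope.
Local Open Scope ring_scope.

Definition CK {R : realType} (eps : R) (K : nat) : R :=
  (1 + eps) * \sum_(1 <= j < K.+1) (j%:R)^-1.

Definition thr {R : realType} (alpha eps : R) (K j : nat) : R :=
  alpha * j%:R / (CK eps K * K%:R).

(* a_j = floor((n_cal + 1) * alpha j / (C(K) K)); the argument is >= 0,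
   so the floor is a natural number (Num.truncn = floor on nonnegatives). *)
Definition a_ {R : realType} (alpha eps : R) (K ncal j : nat) : nat :=
  Num.truncn ((ncal.+1)%:R * thr alpha eps K j).

Definition b_ {R : realType} (alpha eps : R) (K ncal j : nat) : nat :=
  ncal.+1 - a_ alpha eps K ncal j.

Definition mu_ {R : realType} (alpha eps : R) (K ncal j : nat) : R :=
  (a_ alpha eps K ncal j)%:R /
  ((a_ alpha eps K ncal j)%:R + (b_ alpha eps K ncal j)%:R).

Definition reg_inc_beta {R : realType} (x : R) (a b : nat) : R :=
  fine (beta_prob (R := R) a b `]-oo, x]).

(* Main.v *)
Require Import Defs.
From HB Require Import structures.
From mathcomp Require Import all_boot all_order all_algebra.
From mathcomp Require Import all_classical all_reals all_analysis.
From mathcomp Require Import ring lra.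
Import Order.TTheory GRing.Theory Num.Theory.
Local Open Scope classical_set_scope.
Local Open Scope ring_scope.


Theorem lemma1 (R : realType) (d : measure_display) (T : measurableType d)
  (P : probability T R) (K : nat) (alpha eps delta : R) (ncal : nat)
  (r : nat -> nat -> {RV P >-> R}) :
  (1 <= K)%N -> 0 < alpha < 1 -> 0 < eps -> 0 < delta -> (0 < ncal)%N ->
  (forall j, (1 <= j <= K)%N ->
     (1 <= a_ alpha eps K ncal j)%N /\ (1 <= b_ alpha eps K ncal j)%N) ->
  (forall j, (1 <= j <= K)%N ->
     1 - delta / (K%:R ^+ 2) <=
     reg_inc_beta ((1 + eps) * mu_ alpha eps K ncal j)
                  (a_ alpha eps K ncal j) (b_ alpha eps K ncal j)) ->
  (forall i j, (1 <= i <= K)%N -> (1 <= j <= K)%N ->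
     forall A : set R, measurable A ->
       distribution P (r i j) A =
       beta_prob (a_ alpha eps K ncal j) (b_ alpha eps K ncal j) A) ->
  ((1 - delta)%:E <=
   P (\bigcap_(i in [set i | (1 <= i <= K)%N])
        \bigcap_(j in [set j | (1 <= j <= K)%N])
          [set w | (r i j w <= (1 + eps) * thr alpha eps K j)%R]))%E.
Proof.
move=> K1 /andP[a0 a1] e0 d0 n0 hab hI hr.
set c := fun j : nat => (1 + eps) * thr alpha eps K j.
set B := fun i j => r i j @^-1` `]c j, +oo[.
have mB : forall i j, measurable (B i j).
  move=> i j; rewrite /B -[X in measurable X]setTI.
  by apply: (measurable_funP (r i j)) => //.
have thr0 : forall j, 0 <= thr alpha eps K j.
  move=> j; rewrite /thr /CK; apply: divr_ge0; first by rewrite mulr_ge0 // ltW.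
  apply: mulr_ge0 => //; apply: mulr_ge0; first by rewrite addr_ge0 // ltW.
  by apply: sumr_ge0 => i _; rewrite invr_ge0.
have PB : forall i j, (1 <= i <= K)%N -> (1 <= j <= K)%N ->
    (P (B i j) <= (delta / (K%:R ^+ 2))%:E)%E.
  move=> i j hi hj.
  have BC : B i j = ~` (r i j @^-1` `]-oo, c j]).
    rewrite /B; apply/seteqP; split => w /=; rewrite !in_itv /= ?andbT.
      by rewrite ltNge => /negP.
    by move/negP; rewrite -ltNge.
  have mC : measurable (r i j @^-1` `]-oo, c j]).
    rewrite -[X in measurable X]setTI.
    by apply: (measurable_funP (r i j)) => //.
  rewrite BC probability_setC //.
  have := hr i j hi hj _ (measurable_itv `]-oo, c j]).
  rewrite /distribution /pushforward => ->.
  have [ha hb] := hab j hj.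
  set a := a_ alpha eps K ncal j; set b := b_ alpha eps K ncal j.
  set m := (1 + eps) * mu_ alpha eps K ncal j.
  have mc : m <= c j.
    rewrite /m /c; apply: ler_wpM2l; first by rewrite addr_ge0 // ltW.
    rewrite /mu_ -/a -/b.
    have ab : (a + b = ncal.+1)%N.
      rewrite /b /b_ -/a subnKC //; apply: ltnW; rewrite -subn_gt0; exact: hb.
    rewrite -natrD ab ler_pdivrMr ?ltr0n // mulrC.
    by rewrite /a /a_ truncn_le mulr_ge0.
  have le1 : (beta_prob a b `]-oo, m] <= beta_prob a b `]-oo, c j])%E.
    apply: le_measure; rewrite ?inE //.
    by move=> x /=; rewrite !in_itv /= => /le_trans; apply.
  have hm := hI j hj; rewrite /reg_inc_beta -/a -/b -/m in hm.
  have fm : beta_prob a b `]-oo, m] = (fine (beta_prob a b `]-oo, m]))%:E.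
    by rewrite fineK // fin_num_measure.
  have fc : beta_prob a b `]-oo, c j] = (fine (beta_prob a b `]-oo, c j]))%:E.
    by rewrite fineK // fin_num_measure.
  rewrite fc; rewrite fm fc in le1; rewrite lee_fin in le1.
  rewrite -EFinD lee_fin; lra.
set x := delta / K%:R ^+ 2.
have K0 : (K%:R : R) != 0 by rewrite pnatr_eq0 -lt0n.
set F := fun i : nat => \big[setU/set0]_(j < K) B i.+1 j.+1.
set U := \big[setU/set0]_(i < K) F i.
have mF : forall i, measurable (F i).
  by move=> i; apply: bigsetU_measurable => j _.
have PF : forall i, (i < K)%N -> (P (F i) <= (K%:R * x)%:E)%E.
  move=> i iK; have := @Boole_inequality _ _ _ P (fun j => B i.+1 j.+1) K (fun j _ => mB _ _).
  move/le_trans; apply.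
  apply: (@le_trans _ _ (\sum_(j < K) x%:E)%R).
    apply: lee_sum => j _; apply: PB; first by rewrite /= iK.
    by rewrite /= ltn_ord.
  by rewrite sumEFin sumr_const card_ord mulr_natl.
have PU : (P U <= delta%:E)%E.
  have := @Boole_inequality _ _ _ P F K (fun j _ => mF _).
  move/le_trans; apply.
  apply: (@le_trans _ _ (\sum_(i < K) (K%:R * x)%:E)%R).
    by apply: lee_sum => i _; apply: PF.
  rewrite sumEFin sumr_const card_ord -mulr_natl lee_fin /x.
  rewrite -mulr_natl mulr1; rewrite le_eqVlt; apply/orP; left; apply/eqP; field; exact: K0.
have mU : measurable U by apply: bigsetU_measurable => i _.
have sub : ~` U `<=` (\bigcap_(i in [set i | (1 <= i <= K)%N])
        \bigcap_(j in [set j | (1 <= j <= K)%N])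
          [set w | (r i j w <= (1 + eps) * thr alpha eps K j)%R]).
  move=> w nU i /= /andP[i1 iK] j /= /andP[j1 jK].
  rewrite leNgt; apply/negP => hlt.
  apply: nU; apply: (bigsetU_sup (i:=i.-1) (F:=F) (n:=K)); first by rewrite prednK.
  apply: (bigsetU_sup (i:=j.-1) (F:=fun j => B (i.-1).+1 j.+1) (n:=K)); first by rewrite prednK.
  by rewrite /B /= !prednK // in_itv /= andbT.
apply: (le_trans _ (le_measure _ _ _ sub)); rewrite ?inE //; last first.
  apply: bigcap_measurableType => i _; apply: bigcap_measurableType => j _.
  rewrite (_ : [set w | _] = r i j @^-1` `]-oo, c j]); last first.
    by apply/seteqP; split => w /=; rewrite in_itv.
  rewrite -[X in measurable X]setTI.
  by apply: (measurable_funP (r i j)) => //.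
  exact: measurableC.
have hC : P (~` U) = (1 - P U)%E by apply: probability_setC.
apply: (@le_trans _ _ (1 - P U)%E); last by rewrite le_eqVlt; apply/orP; left; apply/eqP; symmetry; exact: hC.
have fU : P U = (fine (P U))%:E by rewrite fineK // fin_num_measure.
rewrite fU -EFinB lee_fin; rewrite fU lee_fin in PU; lra.
Qed.
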